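(* Let $F$ be a field, let $L$ be a finite-dimensional left Leibniz algebra over $F$, and let $V \neq 0$ be a finite-dimensional $L$-bimodule, with left action $T$ and right action $S$, i.e. $T_a(v) = av$ and $S_a(v) = va$ for $a \in L$, $v \in V$. Suppose that $T_a$ is a nilpotent linear map of $V$ for every $a \in L$. Then $S_a$ is nilpotent for every $a \in L$, and there exists $v \in V$, $v \neq 0$, such that $T_a(v) = S_a(v) = 0$ for all $a \in L$.
   Context: A left Leibniz algebra over $F$ is a vector space $L$ with a bilinear product $(x,y)\mapsto xy$ satisfying the left Leibniz identity $x(yz) = (xy)z + y(xz)$ for all $x,y,z \in L$. An $L$-bimodule (equivalently, a representation $(S,T)$ of $L$) is a vector space $V$ together with bilinear maps $L \times V \to V$, $(a,v)\mapsto av$, and $V \times L \to V$, $(v,a) \mapsto va$, such that the split extension $X = V \oplus L$ with product $(v+a)(w+b) = (aw + vb) + ab$ (for $v,w\in V$, $a,b \in L$) is a left Leibniz algebra. *)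

(* Defs.v *)
From HB Require Import structures.
From mathcomp Require Import all_boot all_order all_algebra.
Set Implicit Arguments. Unset Strict Implicit. Unset Printing Implicit Defensive.
Import GRing.Theory.
Local Open Scope ring_scope.

Definition bilinear_map (F : fieldType) (A B C : lmodType F)
  (f : A -> B -> C) : Prop :=
  (forall (k : F) (x y : A) (z : B), f (k *: x + y) z = k *: f x z + f y z) /\
  (forall (k : F) (x : A) (y z : B), f x (k *: y + z) = k *: f x y + f x z).

Definition left_leibniz_identity (X : zmodType) (mul : X -> X -> X) : Prop :=
  forall x y z : X, mul x (mul y z) = mul (mul x y) z + mul y (mul x z).

Definition left_Leibniz_algebra (F : fieldType) (L : lmodType F)
  (mul : L -> L -> L) : Prop :=
  bilinear_map mul /\ left_leibniz_identity mul.

Definition split_product (F : fieldType) (L V : lmodType F)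
  (mul : L -> L -> L) (actl : L -> V -> V) (actr : V -> L -> V)
  (x y : V * L) : V * L :=
  (actl x.2 y.1 + actr x.1 y.2, mul x.2 y.2).

Definition Leibniz_bimodule (F : fieldType) (L V : lmodType F)
  (mul : L -> L -> L) (actl : L -> V -> V) (actr : V -> L -> V) : Prop :=
  bilinear_map actl /\ bilinear_map actr /\
  left_leibniz_identity (split_product mul actl actr).

Definition nilpotent_map (V : zmodType) (f : V -> V) : Prop :=
  exists n : nat, forall v : V, iter n f v = 0.

(* Main.v *)
Require Import Defs.
From HB Require Import structures.
From mathcomp Require Import all_boot all_order all_algebra.
Set Implicit Arguments. Unset Strict Implicit. Unset Printing Implicit Defensive.
Import GRing.Theory.
Local Open Scope ring_scope.

Lemma nilp_subr (R : pzRingType) (x y : R) m :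
  GRing.comm x y -> x ^+ m = 0 -> y ^+ m = 0 -> (x - y) ^+ (m + m) = 0.
Proof.
move=> cxy xm ym; rewrite exprBn_comm //; apply: big1 => [[i /=]]; rewrite ltnS => lei _.
case: (leqP m i) => [mi|im].
  have -> : y ^+ i = 0 by rewrite -(subnK mi) exprD ym mulr0.
  by rewrite mulr0 mul0rn.
have h : (m <= m + m - i)%N by rewrite leq_subRL ?(ltnW (leq_trans im (leq_addr _ _))) // leq_add2r ltnW.
have -> : x ^+ (m + m - i) = 0 by rewrite -(subnK h) exprD xm mulr0.
by rewrite mulr0 mul0r mul0rn.
Qed.

Lemma zid (V : zmodType) (a b c d e f : V) :
  a - b + (- c - - d) = a - e + (- f - - d) + (- b - - f + (- - e - - - c)).
Proof.
rewrite !opprK.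
have E1 : - b + f + (e - c) = (- b - c) + (f + e).
  by rewrite [RHS]addrACA (addrC (- c)).
have E2 : a - e + (- f + d) = (a + d) - (f + e).
  by rewrite opprD [RHS]addrACA [LHS]addrACA (addrC (- e)).
rewrite E1 E2 [RHS]addrACA addNr addr0.
by rewrite (addrC (- c)) addrACA.
Qed.

Section S.
Variable F : fieldType.
Definition mkhom (aT rT : vectType F) (f : aT -> rT) : 'Hom(aT, rT) := linfun f.
Lemma mkhomE (aT rT : vectType F) (f : aT -> rT) :
  (forall k x y, f (k *: x + y) = k *: f x + f y) -> mkhom f =1 f.
Proof.
move=> Hf.
pose ff : {linear aT -> rT} := HB.pack f (GRing.isLinear.Build F aT rT *:%R f Hf).
exact: (lfunE ff).
Qed.

Definition nilp (X : vectType F) (g : 'End(X)) := exists m, forall x, iter m g x = 0.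

Section Br.
Variable X : vectType F.
Fact br_key : unit. Proof. by []. Qed.
Definition br (f g : 'End(X)) : 'End(X) := locked_with br_key ((f \o g)%VF - (g \o f)%VF).

Lemma brE f g x : br f g x = f (g x) - g (f x).
Proof. by rewrite /br locked_withE add_lfunE opp_lfunE !comp_lfunE. Qed.

Lemma brDl f g h : br (f + g) h = br f h + br g h.
Proof.
apply/lfunP => x; rewrite !add_lfunE !brE !add_lfunE linearD /=.
by rewrite opprD addrACA.
Qed.
Lemma brZl a f h : br (a *: f) h = a *: br f h.
Proof.
apply/lfunP => x; rewrite scale_lfunE !brE !scale_lfunE linearZ /=.
by rewrite scalerBr.
Qed.
Lemma br_anti f g : br f g = - br g f.
Proof. by apply/lfunP => x; rewrite opp_lfunE !brE opprB. Qed.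
Lemma brxx f : br f f = 0.
Proof. by apply/lfunP => x; rewrite zero_lfunE brE subrr. Qed.
Lemma brDr f g h : br h (f + g) = br h f + br h g.
Proof. by rewrite br_anti brDl opprD -!br_anti. Qed.
Lemma brZr a f h : br h (a *: f) = a *: br h f.
Proof. by rewrite br_anti brZl -scalerN -br_anti. Qed.

End Br.

Section Ad.
Variable X : vectType F.
Definition lcm (k : 'End(X)) : 'End('End(X)) := mkhom (fun h => k \o h)%VF.
Definition rcm (k : 'End(X)) : 'End('End(X)) := mkhom (fun h => h \o k)%VF.
Definition adm (k : 'End(X)) : 'End('End(X)) := mkhom (br k).

Lemma lcmE k h : lcm k h = (k \o h)%VF.
Proof.
apply: mkhomE => a x y; apply/lfunP => v.
by rewrite !lfunE /= !lfunE /= !lfunE /= linearD linearZ.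
Qed.
Lemma rcmE k h : rcm k h = (h \o k)%VF.
Proof.
apply: mkhomE => a x y; apply/lfunP => v.
by rewrite !lfunE /= !lfunE /= !lfunE.
Qed.
Lemma admE k h : adm k h = br k h.
Proof.
apply: mkhomE => a x y; apply/lfunP => v.
rewrite add_lfunE scale_lfunE !brE !lfunE /= !lfunE /=.
by rewrite linearD linearZ /= scalerBr opprD addrACA.
Qed.

Lemma ad_nilp (H : (0 < dim X)%N) k : nilp k -> nilp (adm k).
Proof.
case=> m km.
have H2 : (0 < dim 'End(X))%N by rewrite /= muln_gt0 H.
pose RR := lfun_comp_nzRingType H2.
have iterE : forall (f : RR) n h, iter n f h = ((f ^+ n : RR) : 'End('End(X))) h.
  move=> f; elim=> [|n IH] h; first by rewrite expr0 /= id_lfunE.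
  by rewrite exprS /= IH comp_lfunE.
have iterL : forall n h x, iter n (lcm k) h x = iter n k (h x).
  elim=> [|n IH] h x /=; first done. rewrite lcmE comp_lfunE. exact: (congr1 k (IH h x)).
have iterR : forall n h x, iter n (rcm k) h x = h (iter n k x).
  elim=> [|n IH] h x //=; rewrite rcmE comp_lfunE.
  exact: etrans (IH h (k x)) (congr1 h (esym (iterSr _ _ _))).
have Lm : (lcm k : RR) ^+ m = 0.
  apply/lfunP => h; rewrite -iterE zero_lfunE; apply/lfunP => x.
  by rewrite iterL km zero_lfunE.
have Rm : (rcm k : RR) ^+ m = 0.
  apply/lfunP => h; rewrite -iterE zero_lfunE; apply/lfunP => x.
  by rewrite iterR km linear0 zero_lfunE.
have cLR : GRing.comm (lcm k : RR) (rcm k : RR).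
  apply/lfunP => h; rewrite /= !comp_lfunE !lcmE !rcmE; apply/lfunP => x.
  by rewrite !comp_lfunE.
have adE : (adm k : RR) = (lcm k : RR) - (rcm k : RR).
  apply/lfunP => h; rewrite admE /= add_lfunE opp_lfunE lcmE rcmE; apply/lfunP => x.
  by rewrite brE add_lfunE opp_lfunE !comp_lfunE.
exists (m + m)%N; move=> h.
by rewrite (iterE (adm k : RR)) adE (nilp_subr cLR Lm Rm) zero_lfunE.
Qed.

Lemma adm_lin a k1 k2 : adm (a *: k1 + k2) = a *: adm k1 + adm k2.
Proof.
apply/lfunP => h; rewrite add_lfunE scale_lfunE !admE.
by rewrite brDl brZl.
Qed.
Definition adL : 'Hom('End(X), 'End('End(X))) := mkhom adm.
Lemma adLE k : adL k = adm k.
Proof. apply: mkhomE => a x y; exact: adm_lin. Qed.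

Lemma adm_br k1 k2 : adm (br k1 k2) = br (adm k1) (adm k2).
Proof.
apply/lfunP => h; rewrite brE !admE.
apply/lfunP => x; rewrite !brE !lfunE /= !brE !linearB /= !lfunE /= !brE !linearB /=.
exact: zid.
Qed.
End Ad.

Lemma exists_step (p : nat -> bool) m : ~~ p 0 -> p m -> exists j, ~~ p j /\ p j.+1.
Proof.
elim: m => [|m IH] np0 pm; first by rewrite pm in np0.
case: (boolP (p m)) => [pm'|npm]; [exact: IH | by exists m].
Qed.

Lemma pos_dim (X : vectType F) (v : X) : v != 0 -> (0 < dim X)%N.
Proof.
move=> nz; rewrite lt0n; apply: contra nz => /eqP d0.
have : fullv == 0%VS :> {vspace X} by rewrite -dimv_eq0 dimvf d0.
by move=> /eqP E; have := memvf v; rewrite E memv0.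
Qed.

Lemma engel n : forall (X : vectType F) (G : {vspace 'End(X)}), (\dim G <= n)%N ->
  (forall f g, f \in G -> g \in G -> br f g \in G) ->
  (forall g, g \in G -> nilp g) ->
  forall U W : {vspace X}, (W <= U)%VS -> ~~ (U <= W)%VS ->
  (forall g x, g \in G -> x \in U -> g x \in U) ->
  (forall g x, g \in G -> x \in W -> g x \in W) ->
  exists2 u, u \in U & u \notin W /\ (forall g, g \in G -> g u \in W).
Proof.
have triv : forall (X : vectType F) (G : {vspace 'End(X)}) (U W : {vspace X}),
    G = 0%VS -> ~~ (U <= W)%VS ->
    exists2 u, u \in U & u \notin W /\ (forall g, g \in G -> g u \in W).
  move=> X G U W G0 nUW; have [u Uu nWu] := subvPn nUW.
  exists u => //; split => // g; rewrite G0 memv0 => /eqP ->.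
  by rewrite zero_lfunE mem0v.
elim: n => [|n IHn] X G dG Gbr Gnil U W sWU nUW GU GW.
  by apply: triv nUW; apply/eqP; rewrite -dimv_eq0 -leqn0.
have [G0|nG0] := eqVneq G 0%VS; first exact: triv nUW.
have [u0 Uu0 nWu0] := subvPn nUW.
have dX : (0 < dim X)%N.
  by apply: (@pos_dim _ u0); apply: contraNneq nWu0 => ->; exact: mem0v.
suff main : forall k (K : {vspace 'End(X)}), (\dim G - \dim K <= k)%N ->
   (K <= G)%VS -> K != G ->
   (forall f g, f \in K -> g \in K -> br f g \in K) ->
   exists2 u, u \in U & u \notin W /\ (forall g, g \in G -> g u \in W).
  apply: (main (\dim G) 0%VS); [exact: leq_subr | exact: sub0v | by rewrite eq_sym | ].
  by move=> f g; rewrite !memv0 => /eqP -> /eqP ->; rewrite brxx.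
elim=> [|k IHk] K dK sKG nKG Kbr.
  have ltKG : (\dim K < \dim G)%N by rewrite (ltn_leqif (dimv_leqif_eq sKG)) nKG.
  by move: dK; rewrite leqn0 subn_eq0 leqNgt ltKG.
have ltKG : (\dim K < \dim G)%N by rewrite (ltn_leqif (dimv_leqif_eq sKG)) nKG.
have dK' : (\dim K <= n)%N by rewrite -ltnS (leq_trans ltKG dG).
have KG : forall g, g \in K -> g \in G by move=> g; apply: (subvP sKG).
have [y Gy [nKy Ky]] : exists2 y, y \in G & y \notin K /\
    (forall g, g \in (adL X @: K)%VS -> g y \in K).
  apply: (IHn _ (adL X @: K)%VS).
  - apply: leq_trans dK'.
    by rewrite -[X in (_ <= X)%N](limg_ker_dim (adL X) K) leq_addl.
  - move=> f g /memv_imgP[k1 Kk1 ->] /memv_imgP[k2 Kk2 ->].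
    by rewrite !adLE -adm_br -adLE; apply: memv_img; apply: Kbr.
  - move=> g /memv_imgP[k1 Kk1 ->]; rewrite adLE.
    exact: (ad_nilp dX (Gnil _ (KG _ Kk1))).
  - exact: sKG.
  - by apply: contra nKG => sGK; rewrite eqEsubv sKG sGK.
  - move=> g x /memv_imgP[k1 Kk1 ->] Gx; rewrite adLE admE.
    by apply: Gbr => //; apply: KG.
  - by move=> g x /memv_imgP[k1 Kk1 ->] Kx; rewrite adLE admE; apply: Kbr.
have Kb : forall k1, k1 \in K -> br k1 y \in K.
  by move=> k1 Kk1; have := Ky _ (memv_img (adL X) Kk1); rewrite adLE admE.
have [sGK'|nsGK'] := boolP (G <= K + <[y]>)%VS.
  have [u Uu [nWu Ku]] := IHn X K dK' Kbr (fun g Kg => Gnil g (KG g Kg)) U W sWU nUW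
     (fun g x Kg => GU g x (KG g Kg)) (fun g x Kg => GW g x (KG g Kg)).
  have iterU : forall j, iter j y u \in U by elim=> //= j IH; exact: GU.
  have iterK : forall j k1, k1 \in K -> k1 (iter j y u) \in W.
    elim=> [|j IH] k1 Kk1 /=; first exact: Ku.
    have -> : k1 (y (iter j y u)) = y (k1 (iter j y u)) + br k1 y (iter j y u).
      by rewrite brE addrC subrK.
    by rewrite memvD // ?(GW _ _ Gy (IH _ Kk1)) ?(IH _ (Kb _ Kk1)).
  have [m ym] := Gnil y Gy.
  have pm : iter m y u \in W by rewrite ym mem0v.
  have [j [nj pj]] := @exists_step (fun j => iter j y u \in W) m nWu pm.
  exists (iter j y u); [exact: iterU | split => //].
  move=> g /(subvP sGK') /memv_addP [k1 Kk1 [z /vlineP [a ->] ->]].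
  rewrite add_lfunE scale_lfunE; apply: memvD; first exact: iterK.
  by apply: memvZ; exact: pj.
have sK'G : (K + <[y]> <= G)%VS by rewrite subv_add sKG -memvE.
have ltKK' : (\dim K < \dim (K + <[y]>))%N.
  rewrite (ltn_leqif (dimv_leqif_sup (addvSl K <[y]>))).
  by rewrite subv_add -memvE (negPf nKy) andbF.
apply: (IHk (K + <[y]>)%VS).
- by rewrite -ltnS; apply: leq_trans dK; exact: ltn_sub2l ltKG ltKK'.
- exact: sK'G.
- by apply: contraNneq nsGK' => ->; exact: subvv.
- move=> f g /memv_addP[k1 Kk1 [z1 /vlineP[a ->] ->]].
  move=> /memv_addP[k2 Kk2 [z2 /vlineP[b ->] ->]].
  apply: (subvP (addvSl K <[y]>)).
  rewrite !brDl !brDr !brZl !brZr brxx (br_anti y k2).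
  rewrite !scaler0 addr0 scalerN.
  apply: rpredD; first apply: rpredD.
  + exact: Kbr.
  + exact: rpredZ (Kb _ Kk1).
  + by rewrite rpredN; apply: rpredZ; exact: Kb.
Qed.
End S.

Lemma lin0 (F : fieldType) (A B : lmodType F) (f : A -> B) :
  (forall k x y, f (k *: x + y) = k *: f x + f y) -> f 0 = 0.
Proof.
move=> Hf; have := Hf 1 0 0; rewrite scaler0 addr0 scale1r.
by move=> /(congr1 (fun t => t - f 0)); rewrite subrr addrK.
Qed.

Theorem theorem2 (F : fieldType) (L V : vectType F)
  (mul : L -> L -> L) (actl : L -> V -> V) (actr : V -> L -> V) :
  left_Leibniz_algebra mul ->
  Leibniz_bimodule mul actl actr ->
  (exists v0 : V, v0 != 0) ->
  (forall a : L, nilpotent_map (actl a)) ->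
  (forall a : L, nilpotent_map (fun v => actr v a)) /\
  (exists v : V, v != 0 /\ forall a : L, actl a v = 0 /\ actr v a = 0).
Proof.
move=> [[m1 m2] _] [[l1 l2] [[r1 r2] lid]] [v0 nv0] Tnil.
have l0a : forall v, actl 0 v = 0 by move=> v; apply: (@lin0 _ _ _ (fun a => actl a v)) => k x y; exact: l1.
have la0 : forall a, actl a 0 = 0 by move=> a; apply: lin0 => k x y; exact: l2.
have r0a : forall a, actr 0 a = 0 by move=> a; apply: (@lin0 _ _ _ (fun v => actr v a)) => k x y; exact: r1.
have ra0 : forall v, actr v 0 = 0 by move=> v; apply: lin0 => k x y; exact: r2.
have m0b : forall b, mul 0 b = 0 by move=> b; apply: (@lin0 _ _ _ (fun a => mul a b)) => k x y; exact: m1.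
have ma0 : forall a, mul a 0 = 0 by move=> a; apply: lin0 => k x y; exact: m2.
have rD : forall x y c, actr (x + y) c = actr x c + actr y c.
  by move=> x y c; have := r1 1 x y c; rewrite !scale1r.
have rZ : forall k x c, actr (k *: x) c = k *: actr x c.
  by move=> k x c; have := r1 k x 0 c; rewrite !addr0 r0a addr0.
have LLM : forall a b u, actl a (actl b u) = actl (mul a b) u + actl b (actl a u).
  move=> a b u; have := congr1 fst (lid (0, a) (0, b) (u, 0)).
  by rewrite /split_product /= ?la0 ?l0a ?r0a ?ma0 ?m0b ?ra0 ?addr0 ?add0r.
have LML : forall a w c, actl a (actr w c) = actr (actl a w) c + actr w (mul a c).
  move=> a w c; have := congr1 fst (lid (0, a) (w, 0) (0, c)).
  by rewrite /split_product /= ?la0 ?l0a ?r0a ?ma0 ?m0b ?ra0 ?addr0 ?add0r.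
have MLL : forall v b c, actr v (mul b c) = actr (actr v b) c + actl b (actr v c).
  move=> v b c; have := congr1 fst (lid (v, 0) (0, b) (0, c)).
  by rewrite /split_product /= ?la0 ?l0a ?r0a ?ma0 ?m0b ?ra0 ?addr0 ?add0r.
have key : forall b v c, actr (actl b v + actr v b) c = 0.
  move=> b v c; rewrite rD.
  have -> : actr (actl b v) c = actl b (actr v c) - actr v (mul b c) by rewrite LML addrK.
  have -> : actr (actr v b) c = actr v (mul b c) - actl b (actr v c) by rewrite MLL addrK.
  by rewrite addrA subrK subrr.
split.
  move=> a; have [m Hm] := Tnil a.
  have SS : forall w, actr (actr w a) a = - actr (actl a w) a.
    move=> w; apply/eqP; rewrite -addr_eq0 addrC -rD; apply/eqP; exact: key.
  have It : forall k v, iter k.+1 (fun v => actr v a) v = (-1) ^+ k *: actr (iter k (actl a) v) a.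
    elim=> [|k IH] v; first by rewrite /= expr0 scale1r.
    rewrite iterS IH rZ SS /= exprS mulN1r scaleNr scalerN //.
  by exists m.+1 => v; rewrite It Hm r0a scaler0.
pose Tm a : 'End(V) := mkhom (actl a).
have TmE : forall a v, Tm a v = actl a v by move=> a; apply: mkhomE => k x y; exact: l2.
pose linT : 'Hom(L, 'End(V)) := mkhom Tm.
have linTE : forall a, linT a = Tm a.
  apply: mkhomE => k x y; apply/lfunP => v.
  by rewrite add_lfunE scale_lfunE !TmE l1.
have linTv : forall a v, linT a v = actl a v by move=> a v; rewrite linTE TmE.
pose G := limg linT.
have Gbr : forall f g, f \in G -> g \in G -> br f g \in G.
  move=> f g /memv_imgP[a _ ->] /memv_imgP[b _ ->].
  have -> : br (linT a) (linT b) = linT (mul a b).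
    by apply/lfunP => v; rewrite brE !linTv LLM addrK.
  exact: memv_img (memvf _).
have Gnil : forall g, g \in G -> nilp g.
  move=> g /memv_imgP[a _ ->]; have [m Hm] := Tnil a.
  exists m => v; rewrite -(Hm v); apply: eq_iter; exact: linTv.
pose Sm v : 'Hom(L, V) := mkhom (actr v).
have SmE : forall v a, Sm v a = actr v a by move=> v; apply: mkhomE => k x y; exact: r2.
pose Phi : 'Hom(V, 'Hom(L, V)) := mkhom Sm.
have PhiE : forall v, Phi v = Sm v.
  apply: mkhomE => k x y; apply/lfunP => a.
  by rewrite add_lfunE scale_lfunE !SmE r1.
pose K := lker Phi.
have KP1 : forall v, v \in K -> forall a, actr v a = 0.
  move=> v; rewrite memv_ker PhiE => /eqP Hv a.
  by have := congr1 (fun f : 'Hom(L, V) => f a) Hv; rewrite /= SmE zero_lfunE.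
have KP2 : forall v, (forall a, actr v a = 0) -> v \in K.
  move=> v Hv; rewrite memv_ker PhiE; apply/eqP/lfunP => a.
  by rewrite SmE zero_lfunE.
have GW : forall g x, g \in G -> x \in (0 : {vspace V})%VS -> g x \in (0 : {vspace V})%VS.
  by move=> g x _; rewrite memv0 => /eqP ->; rewrite linear0 mem0v.
have [K0|nK0] := eqVneq K 0%VS.
  have nUW : ~~ (fullv <= (0 : {vspace V}))%VS.
    by apply/subvPn; exists v0; rewrite ?memvf ?memv0.
  have [u _ [nWu Tu]] := @engel _ (\dim G) V G (leqnn _) Gbr Gnil fullv 0%VS (sub0v _) nUW
    (fun g x _ _ => memvf (g x)) GW.
  exists u; split; first by rewrite memv0 in nWu.
  move=> a; have Ta : actl a u = 0.
    by have := Tu _ (memv_img linT (memvf a)); rewrite linTv memv0 => /eqP.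
  split => //.
  have := KP2 _ (key a u); rewrite K0 memv0 Ta add0r => /eqP //.
have nUW : ~~ (K <= (0 : {vspace V}))%VS by rewrite subv0.
have GU : forall g x, g \in G -> x \in K -> g x \in K.
  move=> g x /memv_imgP[a _ ->] Kx; rewrite linTv; apply: KP2 => c.
  have := LML a x c; rewrite (KP1 x Kx c) (KP1 x Kx (mul a c)) la0 addr0.
  by move=> <-.
have [u Ku [nWu Tu]] := @engel _ (\dim G) V G (leqnn _) Gbr Gnil K 0%VS (sub0v _) nUW GU GW.
exists u; split; first by rewrite memv0 in nWu.
move=> a; split; last exact: KP1.
by have := Tu _ (memv_img linT (memvf a)); rewrite linTv memv0 => /eqP.
Qed.
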